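(* Let $X$ be a completely regular space and $G$ an infinite open subset of $X$. Then there exist a sequence $(x_n)_{n=1}^\infty$ in $G$ and a continuous function $f:X\to[-1,1]$ such that $\operatorname{supp}f\subseteq G$, $f(x_{2k-1})=\frac1k$ and $f(x_{2k})=-\frac1k$ for all $k\in\mathbb N$.
   Context: Completely regular spaces are assumed $T_1$. For $f:X\to\mathbb R$, $\operatorname{supp}f=\{x\in X:f(x)\ne0\}$. *)

(* Defs.v *)
From HB Require Import structures.
From mathcomp Require Import all_boot all_order all_algebra.
From mathcomp Require Import all_classical all_reals all_analysis.
Import Order.TTheory GRing.Theory Num.Theory.
Import numFieldNormedType.Exports.
Local Open Scope classical_set_scope.
Local Open Scope ring_scope.

Definition completely_regular (R : realType) (X : topologicalType) : Prop :=
  accessible_space X /\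
  forall (x : X) (B : set X), closed B -> ~ B x ->
    exists f : X -> R, continuous f /\ (forall y, 0 <= f y <= 1) /\
      f x = 0 /\ (forall b, B b -> f b = 1).

(* supp f = {x : f x <> 0} (no closure) *)
Definition supp {R : realType} {X : Type} (f : X -> R) : set X :=
  [set x | f x != 0].

(* Main.v *)
Require Import Defs.
From HB Require Import structures.
From mathcomp Require Import all_boot all_order all_algebra.
From mathcomp Require Import all_classical all_reals all_analysis.
From mathcomp Require Import ring lra zify.
Import Order.TTheory GRing.Theory Num.Theory.
Import numFieldNormedType.Exports.
Local Open Scope classical_set_scope.
Local Open Scope ring_scope.

Lemma step_lemma (R : realType) (X : topologicalType) (W : set X) :
  completely_regular R X -> open W -> ~ finite_set W ->
  exists PN : set X * set X, [/\ open PN.1, PN.1 !=set0, PN.1 `<=` W,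
    open PN.2 & [/\ ~ finite_set PN.2, PN.2 `<=` W &
    forall y, PN.1 y -> ~ PN.2 y]].
Proof.
move=> [T1 CR] oW iW.
have [a Wa] := infinite_setN0 iW.
have [b [Wb /= nba]] := infinite_setN0 (infinite_setD iW (finite_set1 a)).
have nab : ~ [set b] a by move=> /= ab; apply: nba; rewrite ab.
have [phi [cphi [phi01 [phia phib]]]] :=
  CR a [set b] (@accessible_closed_set1 _ T1 b) nab.
have phib1 : phi b = 1 by apply: phib.
have ophi : forall A, open A -> open (phi @^-1` A) by move=> A; exact: (continuousP phi).1 cphi A.
pose u : R := 3%:R^-1. pose v : R := 2%:R * 3%:R^-1.
have u0 : 0 < u by rewrite /u invr_gt0 ltr0n.
have uv : u < v by rewrite /v /u ltr_pMl ?invr_gt0 ?ltr0n // ltr1n.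
have v1 : v < 1 by rewrite /v ltr_pdivrMr ?ltr0n // mul1r ltr_nat.
have oA1 : open (W `&` phi @^-1` [set r | r < u]) by apply: openI => //; apply: ophi; apply: open_lt.
have oA2 : open (W `&` phi @^-1` [set r | v < r]) by apply: openI => //; apply: ophi; apply: open_gt.
have oN1 : open (W `&` phi @^-1` [set r | u < r]) by apply: openI => //; apply: ophi; apply: open_gt.
have oN2 : open (W `&` phi @^-1` [set r | r < v]) by apply: openI => //; apply: ophi; apply: open_lt.
have cover : W `<=` (W `&` phi @^-1` [set r | u < r]) `|` (W `&` phi @^-1` [set r | r < v]).
  move=> y Wy; case: (ltP u (phi y)) => h; [left|right]; split => //=.
  exact: le_lt_trans h uv.
have [fin1|inf1] := pselect (finite_set (W `&` phi @^-1` [set r | u < r])).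
  have inf2 : ~ finite_set (W `&` phi @^-1` [set r | r < v]).
    move=> fin2; apply: iW; apply: sub_finite_set cover _.
    by rewrite finite_setU.
  exists (W `&` phi @^-1` [set r | v < r], W `&` phi @^-1` [set r | r < v]).
  split.
  - exact: oA2.
  - by exists b; split => //=; rewrite phib1.
  - by move=> y [].
  - exact: oN2.
  split; first exact: inf2.
  - by move=> y [].
  - by move=> y [_ /= h1] [_ /= h2]; move: (lt_trans h1 h2); rewrite ltxx.
exists (W `&` phi @^-1` [set r | r < u], W `&` phi @^-1` [set r | u < r]).
split.
- exact: oA1.
- by exists a; split => //=; rewrite phia.
- by move=> y [].
- exact: oN1.
split; first exact: inf1.
- by move=> y [].
- by move=> y [_ /= h1] [_ /= h2]; move: (lt_trans h1 h2); rewrite ltxx.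
Qed.

Theorem lemma6p2 (R : realType) (X : topologicalType) (G : set X) :
  completely_regular R X -> open G -> ~ finite_set G ->
  exists (x : nat -> X) (f : X -> R),
    (forall n : nat, (0 < n)%N -> G (x n)) /\
    continuous f /\ (forall y, -1 <= f y <= 1) /\
    supp f `<=` G /\
    (forall k : nat, (0 < k)%N ->
       f (x (2 * k - 1)%N) = k%:R^-1 /\ f (x (2 * k)%N) = - k%:R^-1).
Proof.
move=> CRX oG iG.
have /choice [st Hst] : forall W : set X, exists PN : set X * set X,
  open W -> ~ finite_set W -> [/\ open PN.1, PN.1 !=set0, PN.1 `<=` W,
    open PN.2 & [/\ ~ finite_set PN.2, PN.2 `<=` W &
    forall y, PN.1 y -> ~ PN.2 y]].
  move=> W; have [[oW iW]|nW] := pselect (open W /\ ~ finite_set W).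
    have [PN HPN] := @step_lemma R _ _ CRX oW iW; by exists PN.
  by exists (set0, set0) => oW iW; exfalso; apply: nW.
pose Ws n := iter n (fun W => (st W).2) G.
have HW : forall n, [/\ open (Ws n), ~ finite_set (Ws n) & Ws n `<=` G].
  elim=> [ | n IHn]; first by split.
  case: IHn => oW1 i1 s1.
  have [_ _ _ o2 [i2 s2 _]] := Hst _ oW1 i1.
  split => //; exact: subset_trans s2 s1.
pose P n := (st (Ws n)).1.
have HP : forall n, [/\ open (P n), P n !=set0, P n `<=` Ws n,
    Ws n.+1 `<=` Ws n & forall y, P n y -> ~ Ws n.+1 y].
  move=> n; have [oW1 i1 _] := HW n.
  have [h1 h2 h3 h4 [h5 h6 h7]] := Hst _ oW1 i1.
  by split.
have Wdec : forall n m, Ws (m + n)%N `<=` Ws n.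
  move=> n; elim=> [ | m IH] //=.
  have [_ _ _ h _] := HP (m + n)%N.
  exact: subset_trans h IH.
have Pdisj : forall n m y, P n y -> P m y -> n = m.
  suff H : forall n m y, (n < m)%N -> P n y -> P m y -> False.
    move=> n m y Pn Pm; case: (ltngtP n m) => // h; exfalso.
      exact: H h Pn Pm.
    exact: H h Pm Pn.
  move=> n m y nm Pn Pm.
  have [_ _ _ _ d] := HP n; apply: (d y Pn).
  have Wm : Ws m y by have [_ _ s _ _] := HP m; apply: s.
  by have := Wdec n.+1 (m - n.+1)%N y; rewrite subnK //; apply.
have /choice [xg Hxg] : forall n, exists p : X * (X -> R),
    [/\ P n p.1, continuous p.2, (forall y, 0 <= p.2 y <= 1), p.2 p.1 = 1 &
      forall y, ~ P n y -> p.2 y = 0].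
  move=> n; have [oP [x0 Px0] _ _ _] := HP n.
  have [_ CR] := CRX.
  have [f [cf [f01 [fx0 fB]]]] := CR x0 (~` P n) (open_closedC oP) (fun h => h Px0).
  exists (x0, fun y => 1 - f y); split => //=.
  - move=> y; have := cvgB (cvg_cst (1:R)) (cf y).
    exact.
  - move=> y; have /andP[h1 h2] := f01 y.
    by apply/andP; split; rewrite ?subr_ge0 // lerBlDr lerDl.
  - by rewrite fx0 subr0.
  - by move=> y nP; rewrite fB ?subrr.
pose x n := (xg n).1.
pose g n := (xg n).2.
have /choice [idx Hidx] : forall y, exists m, forall n, n != m -> g n y = 0.
  move=> y; have [[m Pm]|nP] := pselect (exists m, P m y).
    exists m => n nm; have [_ _ _ _ h] := Hxg n; apply: h => Pn.
    by move/eqP: nm; apply; apply: Pdisj Pn Pm.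
  exists 0%N => n _; have [_ _ _ _ h] := Hxg n; apply: h => Pn.
  by apply: nP; exists n.
pose c n : R := (if odd n then 1 else -1) * (uphalf n)%:R^-1.
pose F y := c (idx y) * g (idx y) y.
exists x, F.
have gb : forall n y, 0 <= g n y <= 1.
  by move=> n y; case: (Hxg n) => _ _ h _ _; exact: h.
have cb : forall n, `|c n| = (uphalf n)%:R^-1.
  move=> n; rewrite normrM; case: odd; rewrite ?normrN normr1 mul1r;
  by rewrite ger0_norm // invr_ge0 ler0n.
have cle1 : forall n, `|c n| <= 1.
  move=> n; rewrite cb; case: (uphalf n) => [|k]; first by rewrite invr0 ler01.
  by rewrite invf_le1 ?ltr0n // ler1n.
have Fb : forall y, `|F y| <= 1.
  move=> y; rewrite normrM; have /andP[g0 g1] := gb (idx y) y.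
  by apply: mulr_ile1 => //; rewrite ?normr_ge0 ?ger0_norm.
have idx_x : forall n, idx (x n) = n.
  move=> n; apply/eqP; apply/negPn/negP => hne.
  have [_ _ _ h1 _] := Hxg n.
  have := Hidx (x n) n; rewrite eq_sym => /(_ hne).
  by rewrite /g /x h1 => /eqP; rewrite oner_eq0.
have hsum : forall N z, \sum_(n < N) c n * g n z = if (idx z < N)%N then F z else 0.
  move=> N z; elim: N => [|N IH]; first by rewrite big_ord0.
  rewrite big_ord_recr /= IH.
  case: (ltngtP (idx z) N) => h.
  - by rewrite ltnS ltnW // Hidx ?mulr0 ?addr0 // neq_ltn h orbT.
  - by rewrite ltnS leqNgt h /= Hidx ?mulr0 ?addr0 // neq_ltn h.
  - by rewrite h ltnSn add0r /F h.
split.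
  move=> n _; have [Pn _ _ _ _] := Hxg n; have [_ _ s _ _] := HP n.
  have [_ _ sG] := HW n; exact: sG _ (s _ Pn).
split; last first.
split.
  move=> y; have := Fb y; by rewrite ler_norml.
split.
  move=> y; rewrite /supp /F /= mulf_eq0 negb_or => /andP[_ gn0].
  have [Pn _ _ _ h] := Hxg (idx y).
  have Py : P (idx y) y by apply: contrapT => nP; move: gn0; rewrite /g h // eqxx.
  have [_ _ s _ _] := HP (idx y); have [_ _ sG] := HW (idx y); exact: sG _ (s _ Py).
move=> k k0; rewrite /F !idx_x.
have [_ _ _ h1 _] := Hxg (2 * k - 1)%N; have [_ _ _ h2 _] := Hxg (2 * k)%N.
rewrite /g /x h1 h2 !mulr1 /c. clear h1 h2.
case: k k0 => [//|k] _.
have -> : (2 * k.+1 - 1)%N = (k.*2).+1 by rewrite -mul2n; lia.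
have -> : (2 * k.+1)%N = (k.*2).+2 by rewrite -mul2n; lia.
rewrite /= odd_double /= !mul1r uphalf_double.
by rewrite doubleK mulN1r.
move=> y; apply/cvgrPdist_lt => e e0.
have e30 : 0 < e / 3 by rewrite divr_gt0 ?ltr0n.
have [K _ HK] := near_infty_natSinv_lt (PosNum e30).
have HK' : K.+1%:R^-1 < e / 3 by apply: HK => /=.
pose N := (2 * K.+1)%N.
have hb : forall z, `|F z - \sum_(n < N) c n * g n z| <= K.+1%:R^-1.
  move=> z; rewrite hsum; case: ifP => hz.
    by rewrite subrr normr0 invr_ge0 ler0n.
  rewrite subr0 normrM; have /andP[g0 g1] := gb (idx z) z.
  apply: (@le_trans _ _ `|c (idx z)|).
    by rewrite (ger0_norm g0) ler_piMr.
  rewrite cb.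
  have hk : (K.+1 <= uphalf (idx z))%N.
    rewrite geq_uphalf_double; move: hz; rewrite /N; lia.
  by rewrite lef_pV2 ?posrE ?ltr0n ?ler_nat // (leq_trans _ hk).
have ch : forall M, (fun z => \sum_(n < M) c n * g n z) @ y --> \sum_(n < M) c n * g n y.
  elim=> [|M IH].
    under eq_fun do rewrite big_ord0. rewrite big_ord0; exact: cvg_cst.
  under eq_fun do rewrite big_ord_recr /=. rewrite big_ord_recr /=.
  apply: cvgD => //; apply: cvgMr.
  by have [_ cg _ _ _] := Hxg M; exact: cg y.
move/cvgrPdist_lt: (ch N) => /(_ (e/3) e30).
apply: filterS => z hz.
have t1 := hb y; have t2 := hb z.
set hy := \sum_(n < N) c n * g n y in t1 hz *.
set hz' := \sum_(n < N) c n * g n z in t2 hz *.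
have E : F y - F z = (F y - hy) + (hy - hz') - (F z - hz') by ring.
have t3 := ler_normB (F y - hy + (hy - hz')) (F z - hz').
have t4 := ler_normD (F y - hy) (hy - hz').
rewrite E; clearbody hy hz'; move: t1 t2 hz t3 t4 HK'.
set A := `|_ + _ - _|. set B := `|F y - hy + _|. set C := `|F z - hz'|. set D := `|F y - hy|. set D2 := `|hy - hz'|. set k1 := K.+1%:R^-1.
clearbody A B C D D2 k1; move=> *; lra.
Qed.
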